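(* Let $$L=D_xD_y(D_x+D_y)+a_{20}D_x^2+a_{11}D_xD_y+a_{02}D_y^2+a_{10}D_x+a_{01}D_y+a_{00},$$ with all $a_{ij}\in K$, and put $s_2=a_{20}-a_{11}+a_{02}$. Then the common obstacle to factorization of $L$ of type $(X)(Y)(X+Y)$ is $$\big(a_{10}-a_{20}a_{11}+a_{20}^2-\partial_x(a_{20})+\partial_y(s_2)\big)D_x+\big(a_{01}-a_{02}a_{11}+a_{02}^2+\partial_x(a_{02}-a_{11})\big)D_y+a_{00}+a_{20}a_{02}s_2+s_2\partial_x(a_{20})+a_{20}\partial_x(s_2)+\partial_x\partial_y(s_2)+a_{02}\partial_y(s_2).$$
   Context: $K$ is a field with two commuting derivations $\partial_x,\partial_y$, and $K[D_x,D_y]$ is the ring of linear differential operators over $K$: $D_xD_y=D_yD_x$, $D_x\circ f=fD_x+\partial_x(f)$ and $D_y\circ f=fD_y+\partial_y(f)$ for $f\in K$. For an operator $M=\sum m_{ij}D_x^iD_y^j$, $\operatorname{ord}(M)$ is the largest $i+j$ with $m_{ij}\ne0$ ($\operatorname{ord}(0)=-\infty$), and the symbol is $\operatorname{Sym}_M=\sum_{i+j=\operatorname{ord}M}m_{ij}X^iY^j$. A factorization of type $(S_1)(S_2)(S_3)$ of $M$ is $M=F_1\circ F_2\circ F_3$ with $\operatorname{Sym}_{F_i}=S_i$. A common obstacle to factorization of $L$ of that type is an operator $R$ such that $L-R$ has such a factorization and $R$ has minimal possible order among such operators. *)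

(* Defs.v *)
From HB Require Import structures.
From mathcomp Require Import all_boot all_order all_algebra.
Set Implicit Arguments. Unset Strict Implicit. Unset Printing Implicit Defensive.
Import Order.TTheory GRing.Theory Num.Theory.
Local Open Scope ring_scope.

Definition derivation (K : fieldType) (d : K -> K) : Prop :=
  (forall a b : K, d (a + b) = d a + d b) /\
  (forall a b : K, d (a * b) = d a * b + a * d b).

(* Linear differential operators  M = sum m_ij D_x^i D_y^j  over K, stored in
   normal form (coefficients on the left) as a bivariate polynomial:
   the coefficient of D_x^i D_y^j is  (M`_i)`_j  (outer variable <-> D_x,
   inner variable <-> D_y).  The same type is used for symbols, with
   outer variable X and inner variable Y. *)
Definition op (K : fieldType) := {poly {poly K}}.

Definition mono (K : fieldType) (c : K) (i j : nat) : op K :=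
  (c *: 'X^j)%:P * 'X^i.

(* Composition in K[D_x,D_y], given by the Leibniz rule (valid since the
   derivations commute):
   (f D_x^i D_y^j) o (g D_x^i' D_y^j')
     = sum_{k<=i, l<=j} C(i,k) C(j,l) f (dx^k dy^l g) D_x^(i-k+i') D_y^(j-l+j'). *)
Definition dcomp (K : fieldType) (dx dy : K -> K) (M N : op K) : op K :=
  \sum_(i < size M) \sum_(j < size M`_i) \sum_(i' < size N)
   \sum_(j' < size N`_i') \sum_(k < i.+1) \sum_(l < j.+1)
     mono (M`_i`_j * ('C(i, k) * 'C(j, l))%:R
             * iter k dx (iter l dy (N`_i'`_j')))
          (i - k + i') (j - l + j').

Definition coef (K : fieldType) (M : op K) (i j : nat) : K := (M`_i)`_j.

(* Shifted order: ord1 M = ord(M) + 1, and ord1 0 = 0 encodes ord(0) = -oo.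
   Comparisons between orders are thus the same as comparisons of ord1. *)
Definition ord1 (K : fieldType) (M : op K) : nat :=
  (\max_(i < size M) \max_(j < size (M`_i)%R | coef M i j != 0%R) (i + j).+1)%N.

Definition Sym (K : fieldType) (M : op K) : op K :=
  \sum_(i < size M) \sum_(j < size M`_i | (i + j).+1 == ord1 M) mono (M`_i`_j) i j.

Definition has_fact_type (K : fieldType) (dx dy : K -> K) (M S1 S2 S3 : op K) : Prop :=
  exists F1 F2 F3 : op K,
    [/\ Sym F1 = S1, Sym F2 = S2, Sym F3 = S3 & M = dcomp dx dy F1 (dcomp dx dy F2 F3)].

Definition common_obstacle (K : fieldType) (dx dy : K -> K) (L S1 S2 S3 R : op K) : Prop :=
  has_fact_type dx dy (L - R) S1 S2 S3 /\
  forall R' : op K, has_fact_type dx dy (L - R') S1 S2 S3 -> (ord1 R <= ord1 R')%N.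

(* Main.v *)
Require Import Defs.
From HB Require Import structures.
From mathcomp Require Import all_boot all_order all_algebra.
From mathcomp Require Import ring zify.
Import GRing.Theory.
Local Open Scope ring_scope.
Set Implicit Arguments. Unset Strict Implicit.

Section Aux.
Variable K : fieldType.
Implicit Types M N : op K.

Lemma coef_mono (c : K) i j i0 j0 :
  coef (mono c i j) i0 j0 = if (i0 == i) && (j0 == j) then c else 0.
Proof.
rewrite /coef /mono coefMXn.
case: (ltnP i0 i) => h.
  by rewrite (_ : (i0 == i) = false) ?coef0 //; apply/negbTE; rewrite ltn_eqF.
rewrite coefC; case: eqP => [e|ne].
  have -> : i0 = i by apply/eqP; rewrite eqn_leq h -subn_eq0 e.
  rewrite eqxx /= -mul_polyC coefCM coefXn; case: (j0 == j); by rewrite ?mulr1 ?mulr0.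
rewrite coef0; case: eqP => // e; case: ne; by rewrite e subnn.
Qed.

Lemma op_eq M N : (forall i j, coef M i j = coef N i j) -> M = N.
Proof. by move=> h; apply/polyP => i; apply/polyP => j; apply: h. Qed.

Lemma coefD' M N i j : coef (M + N) i j = coef M i j + coef N i j.
Proof. by rewrite /coef !coefD. Qed.
Lemma coefB' M N i j : coef (M - N) i j = coef M i j - coef N i j.
Proof. by rewrite /coef !coefB. Qed.
Lemma coef0' i j : coef (0 : op K) i j = 0.
Proof. by rewrite /coef !coef0. Qed.

Lemma mono0 i j : mono (0 : K) i j = 0.
Proof. by apply: op_eq => i0 j0; rewrite coef_mono coef0'; case: ifP. Qed.

Lemma monoD (a b : K) i j : mono (a + b) i j = mono a i j + mono b i j.
Proof. by apply: op_eq => i0 j0; rewrite coefD' !coef_mono; case: ifP; rewrite ?addr0. Qed.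

Lemma widen_sum (V : zmodType) n B (F : nat -> V) : (n <= B)%N ->
  (forall k, (n <= k)%N -> F k = 0) -> \sum_(i < n) F i = \sum_(i < B) F i.
Proof.
move=> hnB hF; rewrite -(big_mkord xpredT F) -(big_mkord xpredT F).
rewrite (big_cat_nat (leq0n n) hnB) /= [X in _ = _ + X]big_nat_cond [X in _ = _ + X]big1 ?addr0 //;
move=> k /andP[/andP[hk _] _]; exact: hF.
Qed.

Lemma sum_collapse (V : zmodType) n (F : 'I_n -> V) i0 (h : (i0 < n)%N) :
  (forall k : 'I_n, val k != i0 -> F k = 0) -> \sum_k F k = F (Ordinal h).
Proof.
move=> hF; rewrite (bigD1 (Ordinal h)) //= big1 ?addr0 //.
Qed.


Lemma coef_out M i j : coef M i j != 0 -> (i < size M)%N && (j < size (M`_i)%R)%N.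
Proof.
rewrite /coef => h; case: (ltnP i (size M)) => hi /=; last by rewrite (nth_default 0 hi) coef0 eqxx in h.
by case: (ltnP j (size (M`_i)%R)) => hj //; rewrite (nth_default 0 hj) eqxx in h.
Qed.

Lemma ord1_leP M n : (Defs.ord1 M <= n)%N <-> forall i j, coef M i j != 0 -> ((i + j).+1 <= n)%N.
Proof.
split.
  move=> h i j hc; move: (coef_out hc) => /andP[hi hj].
  move/bigmax_leqP: h => /(_ (Ordinal hi) isT) /bigmax_leqP /(_ (Ordinal hj)); exact.
move=> h; apply/bigmax_leqP => i _; apply/bigmax_leqP => j hc; exact: h.
Qed.

Lemma ord1_ge M i j : coef M i j != 0 -> ((i + j).+1 <= Defs.ord1 M)%N.
Proof. by move: (ord1_leP M (Defs.ord1 M)) => [h _]; apply: h. Qed.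

Lemma coef_sum (I : finType) (P : pred I) (F : I -> op K) i j :
  coef (\sum_(k | P k) F k) i j = \sum_(k | P k) coef (F k) i j.
Proof.
apply: (big_morph (fun M => coef M i j)); [by move=> x y; rewrite coefD' | exact: coef0'].
Qed.

Lemma coef_Sym M i j : coef (Sym M) i j = if (i + j).+1 == Defs.ord1 M then coef M i j else 0.
Proof.
rewrite /Sym coef_sum.
have [hz|hnz] := eqVneq (coef M i j) 0.
  rewrite hz if_same big1 // => i' _; rewrite coef_sum big1 // => j' _.
  rewrite coef_mono; case: ifP => // /andP[/eqP e1 /eqP e2]; move: hz; rewrite /coef.
  by rewrite e1 e2.
move: (coef_out hnz) => /andP[hi hj].
rewrite (sum_collapse hi) /=.
  rewrite coef_sum big_mkcond (sum_collapse hj) /=.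
  case: ifP => // _; rewrite (coef_mono (M`_i`_j) i j i j) !eqxx //.
  move=> k hk /=; case: ifP => // _; rewrite (coef_mono (M`_i`_k) i k i j).
  by rewrite eq_sym (negbTE hk) andbF.
move=> k hk /=; rewrite coef_sum big1 // => j' _.
rewrite (coef_mono (M`_k`_j') k j' i j).
by rewrite eq_sym (negbTE hk).
Qed.

End Aux.

Section SymS.
Variable K : fieldType.

Lemma ord1_zero (F : op K) i j : (Defs.ord1 F <= 2)%N -> (2 <= i + j)%N -> coef F i j = 0.
Proof.
move=> ho hij; apply/eqP; apply: contraT => hnz.
have := leq_trans (ord1_ge hnz) ho; lia.
Qed.

Lemma sym_shape (F : op K) (p q : K) : Sym F = mono p 1 0 + mono q 0 1 ->
  (p != 0) || (q != 0) -> F = mono p 1 0 + mono q 0 1 + mono (coef F 0 0) 0 0.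
Proof.
move=> h hpq.
have hc i j : coef (Sym F) i j = coef (mono p 1 0 + mono q 0 1) i j by rewrite h.
have e10 := hc 1%N 0%N; have e01 := hc 0%N 1%N.
rewrite coef_Sym coefD' !coef_mono /= addr0 in e10.
rewrite coef_Sym coefD' !coef_mono /= add0r in e01.
have hord : Defs.ord1 F = 2.
  case/orP: hpq => hp.
    by move: e10; case: eqP => // _ e; rewrite -e eqxx in hp.
  by move: e01; case: eqP => // _ e; rewrite -e eqxx in hp.
rewrite hord eqxx in e10 e01.
have ho : (Defs.ord1 F <= 2)%N by rewrite hord.
apply: op_eq => i j; rewrite !coefD' !coef_mono.
case: i => [|[|i]]; case: j => [|[|j]] /=; rewrite ?addr0 ?add0r //;
  by apply: ord1_zero => //; lia.
Qed.

Lemma sym_of (p q c : K) : (p != 0) || (q != 0) ->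
  Sym (mono p 1 0 + mono q 0 1 + mono c 0 0) = mono p 1 0 + mono q 0 1.
Proof.
move=> hpq; set F := _ + mono c 0 0.
have hF i j : coef F i j = coef (mono p 1 0 + mono q 0 1 + mono c 0 0) i j by [].
have hord : Defs.ord1 F = 2.
  apply/eqP; rewrite eqn_leq; apply/andP; split.
    apply/ord1_leP => i j; rewrite hF !coefD' !coef_mono.
    by case: i => [|[|i]]; case: j => [|[|j]] /=; rewrite ?addr0 ?add0r ?eqxx.
  case/orP: hpq => hp.
    by apply: (@ord1_ge _ F 1 0); rewrite hF !coefD' !coef_mono /= addr0 addr0.
  by apply: (@ord1_ge _ F 0 1); rewrite hF !coefD' !coef_mono /= add0r addr0.
apply: op_eq => i j; rewrite coef_Sym hord hF !coefD' !coef_mono.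
by case: i => [|[|i]]; case: j => [|[|j]] /=; rewrite ?addr0 ?add0r.
Qed.

End SymS.

Section Comp.
Variables (K : fieldType) (dx dy : K -> K).
Hypotheses (hdx : derivation dx) (hdy : derivation dy).
Implicit Types M N : op K.

Definition T M N (i j i' j' : nat) : op K :=
  \sum_(k < i.+1) \sum_(l < j.+1)
     mono (coef M i j * ('C(i, k) * 'C(j, l))%:R * iter k dx (iter l dy (coef N i' j')))
          (i - k + i') (j - l + j').

Lemma dcomp_T M N : dcomp dx dy M N =
  \sum_(i < size M) \sum_(j < size (M`_i)%R) \sum_(i' < size N)
   \sum_(j' < size (N`_i')%R) T M N i j i' j'.
Proof. by []. Qed.

Definition bnd M B := forall i j, ((B <= i)%N -> (M`_i)%R = 0) /\ ((B <= j)%N -> (M`_i`_j)%R = 0).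

Lemma bnd_size M B : bnd M B -> (size M <= B)%N /\ forall i, (size (M`_i)%R <= B)%N.
Proof.
move=> h; split; first by apply/leq_sizeP => i hi; case: (h i 0%N) => ->.
by move=> i; apply/leq_sizeP => j hj; case: (h i j) => _ ->.
Qed.

Lemma iter_d0 (d : K -> K) k : derivation d -> iter k d 0 = 0.
Proof.
move=> [hD _]; have d0 : d 0 = 0.
  by have := hD 0 0; rewrite addr0 => /(congr1 (fun x => x - d 0)); rewrite subrr addrK => /esym.
by elim: k => //= k ->.
Qed.

Lemma T_zeroM M N i j i' j' : coef M i j = 0 -> T M N i j i' j' = 0.
Proof.
move=> h; rewrite /T big1 // => k _; rewrite big1 // => l _; by rewrite h !mul0r mono0.
Qed.

Lemma T_zeroN M N i j i' j' : coef N i' j' = 0 -> T M N i j i' j' = 0.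
Proof.
move=> h; rewrite /T big1 // => k _; rewrite big1 // => l _.
by rewrite h !iter_d0 // mulr0 mono0.
Qed.

Definition S3 M N i j i' := \sum_(j' < size (N`_i')%R) T M N i j i' j'.
Definition S2 M N i j := \sum_(i' < size N) S3 M N i j i'.
Definition S1 M N i := \sum_(j < size (M`_i)%R) S2 M N i j.

Lemma dcomp_B M N B : bnd M B -> bnd N B -> dcomp dx dy M N =
  \sum_(i < B) \sum_(j < B) \sum_(i' < B) \sum_(j' < B) T M N i j i' j'.
Proof.
move=> /bnd_size [hM1 hM2] /bnd_size [hN1 hN2].
have -> : dcomp dx dy M N = \sum_(i < size M) S1 M N i by [].
rewrite (widen_sum (F := S1 M N) hM1); last first.
  by move=> k hk; rewrite /S1 (nth_default 0 hk) size_poly0 big_ord0.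
apply: eq_bigr => i _; rewrite /S1 (widen_sum (F := S2 M N i) (hM2 i)); last first.
  move=> k hk; rewrite /S2 big1 // => i' _; rewrite /S3 big1 // => j' _.
  by apply: T_zeroM; rewrite /coef (nth_default 0 hk).
apply: eq_bigr => j _; rewrite /S2 (widen_sum (F := S3 M N i j) hN1); last first.
  by move=> k hk; rewrite /S3 (nth_default 0 hk) size_poly0 big_ord0.
apply: eq_bigr => i' _; rewrite /S3 (widen_sum (F := T M N i j i') (hN2 i')) //.
by move=> k hk; apply: T_zeroN; rewrite /coef (nth_default 0 hk).
Qed.

Lemma bnd_le M B B' : (B <= B')%N -> bnd M B -> bnd M B'.
Proof.
move=> hB h i j; case: (h i j) => h1 h2; split => hh.
  exact: h1 (leq_trans hB hh).
exact: h2 (leq_trans hB hh).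
Qed.

Lemma bnd_ex M : exists B, bnd M B.
Proof.
exists (size M + \max_(i < size M) size (M`_i)%R)%N => i j; split => h.
  by rewrite nth_default // (leq_trans (leq_addr _ _) h).
case: (ltnP i (size M)) => hi; last by rewrite (nth_default 0 hi) coef0.
rewrite nth_default //; apply: leq_trans h; apply: leq_trans (leq_addl _ _).
exact: (leq_bigmax (F := fun i : 'I_(size M) => size (M`_i)%R) (Ordinal hi)).
Qed.

Lemma bndD M1 M2 B : bnd M1 B -> bnd M2 B -> bnd (M1 + M2) B.
Proof.
move=> h1 h2 i j; case: (h1 i j) => a1 b1; case: (h2 i j) => a2 b2.
split => h; first by rewrite coefD a1 ?a2 ?addr0.
by rewrite !coefD b1 ?b2 ?addr0.
Qed.

Lemma bnd3 M1 M2 M3 : exists B, [/\ bnd M1 B, bnd M2 B, bnd M3 B & bnd (M1 + M2) B].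
Proof.
case: (bnd_ex M1) => B1 h1; case: (bnd_ex M2) => B2 h2; case: (bnd_ex M3) => B3 h3.
exists (B1 + B2 + B3)%N.
have e1 : bnd M1 (B1 + B2 + B3) by apply: bnd_le h1; rewrite -addnA leq_addr.
have e2 : bnd M2 (B1 + B2 + B3) by apply: bnd_le h2; rewrite -addnA (leq_trans (leq_addr B3 B2)) // leq_addl.
have e3 : bnd M3 (B1 + B2 + B3) by apply: bnd_le h3; rewrite leq_addl.
by split => //; apply: bndD.
Qed.

Lemma iterD (d : K -> K) k a b : derivation d -> iter k d (a + b) = iter k d a + iter k d b.
Proof. by move=> [hD _]; elim: k => //= k ->; rewrite hD. Qed.

Lemma TDl M1 M2 N i j i' j' : T (M1 + M2) N i j i' j' = T M1 N i j i' j' + T M2 N i j i' j'.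
Proof.
rewrite /T -big_split; apply: eq_bigr => k _; rewrite -big_split; apply: eq_bigr => l _.
by rewrite coefD' !mulrDl monoD.
Qed.

Lemma TDr M N1 N2 i j i' j' : T M (N1 + N2) i j i' j' = T M N1 i j i' j' + T M N2 i j i' j'.
Proof.
rewrite /T -big_split; apply: eq_bigr => k _; rewrite -big_split; apply: eq_bigr => l _.
by rewrite coefD' !iterD // mulrDr monoD.
Qed.

Lemma dcompDl M1 M2 N : dcomp dx dy (M1 + M2) N = dcomp dx dy M1 N + dcomp dx dy M2 N.
Proof.
case: (bnd3 M1 M2 N) => B [h1 h2 h3 h4].
rewrite !(dcomp_B h1 h3) (dcomp_B h2 h3) (dcomp_B h4 h3).
rewrite -big_split; apply: eq_bigr => i _; rewrite -big_split; apply: eq_bigr => j _.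
rewrite -big_split; apply: eq_bigr => i' _; rewrite -big_split; apply: eq_bigr => j' _.
exact: TDl.
Qed.

Lemma dcompDr M N1 N2 : dcomp dx dy M (N1 + N2) = dcomp dx dy M N1 + dcomp dx dy M N2.
Proof.
case: (bnd3 N1 N2 M) => B [h1 h2 h3 h4].
rewrite !(dcomp_B h3 h1) (dcomp_B h3 h2) (dcomp_B h3 h4).
rewrite -big_split; apply: eq_bigr => i _; rewrite -big_split; apply: eq_bigr => j _.
rewrite -big_split; apply: eq_bigr => i' _; rewrite -big_split; apply: eq_bigr => j' _.
exact: TDr.
Qed.

Lemma bnd_mono (c : K) i j B : (i < B)%N -> (j < B)%N -> bnd (mono c i j) B.
Proof.
move=> hi hj i0 j0; split => h.
  apply/polyP => j1; rewrite coef0; have := coef_mono c i j i0 j1; rewrite /coef => ->.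
  by rewrite (_ : (i0 == i) = false) //; apply/negbTE; rewrite neq_ltn (leq_trans hi h) orbT.
have := coef_mono c i j i0 j0; rewrite /coef => ->.
by rewrite (_ : (j0 == j) = false) ?andbF //; apply/negbTE; rewrite neq_ltn (leq_trans hj h) orbT.
Qed.

Lemma dcomp_mono (c e : K) i j i' j' : dcomp dx dy (mono c i j) (mono e i' j') =
  \sum_(k < i.+1) \sum_(l < j.+1)
     mono (c * ('C(i, k) * 'C(j, l))%:R * iter k dx (iter l dy e)) (i - k + i') (j - l + j').
Proof.
pose B := (i + j + i' + j').+1.
have hi : (i < B)%N by rewrite /B; lia.
have hj : (j < B)%N by rewrite /B; lia.
have hi' : (i' < B)%N by rewrite /B; lia.
have hj' : (j' < B)%N by rewrite /B; lia.
rewrite (dcomp_B (bnd_mono c hi hj) (bnd_mono e hi' hj')).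
rewrite (sum_collapse hi) /=; last first.
  move=> k hk; rewrite big1 // => j0 _; rewrite big1 // => i0 _; rewrite big1 // => j1 _.
  by apply: T_zeroM; rewrite coef_mono (negbTE hk).
rewrite (sum_collapse hj) /=; last first.
  move=> k hk; rewrite big1 // => i0 _; rewrite big1 // => j1 _.
  by apply: T_zeroM; rewrite coef_mono (negbTE hk) andbF.
rewrite (sum_collapse hi') /=; last first.
  move=> k hk; rewrite big1 // => j1 _.
  by apply: T_zeroN; rewrite coef_mono (negbTE hk).
rewrite (sum_collapse hj') /=; last first.
  by move=> k hk; apply: T_zeroN; rewrite coef_mono (negbTE hk) andbF.
by rewrite /T !coef_mono !eqxx.
Qed.
Lemma dcomp_c (c e : K) i j : dcomp dx dy (mono c 0 0) (mono e i j) = mono (c * e) i j.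
Proof. by rewrite dcomp_mono !big_ord_recr !big_ord0 /= !add0r mulr1. Qed.

Lemma dcomp_x (c e : K) i j :
  dcomp dx dy (mono c 1 0) (mono e i j) = mono (c * e) i.+1 j + mono (c * dx e) i j.
Proof. by rewrite dcomp_mono !big_ord_recr !big_ord0 /= !add0r !mulr1 addrC. Qed.

Lemma dcomp_y (c e : K) i j :
  dcomp dx dy (mono c 0 1) (mono e i j) = mono (c * e) i j.+1 + mono (c * dy e) i j.
Proof. by rewrite dcomp_mono !big_ord_recr !big_ord0 /= !add0r !mulr1 addrC. Qed.

Lemma der0 (d : K -> K) : derivation d -> d 0 = 0.
Proof. by move=> hd; exact: (iter_d0 1 hd). Qed.
Lemma derD (d : K -> K) a b : derivation d -> d (a + b) = d a + d b.
Proof. by case. Qed.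
Lemma derM (d : K -> K) a b : derivation d -> d (a * b) = d a * b + a * d b.
Proof. by case. Qed.
Lemma derN (d : K -> K) a : derivation d -> d (- a) = - d a.
Proof.
move=> hd; have := derD a (- a) hd; rewrite subrr der0 // => /esym/eqP.
by rewrite addr_eq0 => /eqP ->; rewrite opprK.
Qed.
Lemma der1 (d : K -> K) : derivation d -> d 1 = 0.
Proof.
move=> hd; have := derM 1 1 hd; rewrite !mul1r mulr1.
by move/(congr1 (fun x => x - d 1)); rewrite subrr addrK => /esym.
Qed.

Definition E (c1 c2 c3 : K) :=
  dcomp dx dy (mono 1 1 0 + mono 0 0 1 + mono c1 0 0)
    (dcomp dx dy (mono 0 1 0 + mono 1 0 1 + mono c2 0 0)
       (mono 1 1 0 + mono 1 0 1 + mono c3 0 0)).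

Lemma coefN' (M : op K) i j : coef (- M) i j = - coef M i j.
Proof. by rewrite /coef !coefN. Qed.

Ltac dexp := repeat progress rewrite ?(derD _ _ hdx) ?(derD _ _ hdy) ?(derM _ _ hdx)
  ?(derM _ _ hdy) ?(derN _ hdx) ?(derN _ hdy) ?(der1 hdx) ?(der1 hdy).

Ltac expandE := rewrite ?mono0 ?addr0 ?add0r;
  repeat progress (rewrite ?dcompDl ?dcompDr ?dcomp_x ?dcomp_y ?dcomp_c).

Lemma LE (a20 a11 a02 a10 a01 a00 : K) :
  let Dx := mono (1 : K) 1 0 in
  let Dy := mono (1 : K) 0 1 in
  let L := dcomp dx dy Dx (dcomp dx dy Dy (Dx + Dy))
           + mono a20 2 0 + mono a11 1 1 + mono a02 0 2
           + mono a10 1 0 + mono a01 0 1 + mono a00 0 0 in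
  let s2 := a20 - a11 + a02 in
  let R := mono (a10 - a20 * a11 + a20 ^+ 2 - dx a20 + dy s2) 1 0
         + mono (a01 - a02 * a11 + a02 ^+ 2 + dx (a02 - a11)) 0 1
         + mono (a00 + a20 * a02 * s2 + s2 * dx a20 + a20 * dx s2
                 + dx (dy s2) + a02 * dy s2) 0 0 in
  L - E a02 a20 (- s2) = R.
Proof.
move=> Dx Dy L s2 R; rewrite /L /R /E /Dx /Dy /s2; expandE.
apply: op_eq => i j; rewrite !(coefD', coefB', coefN', coef_mono).
case: i => [|[|[|[|i]]]]; case: j => [|[|[|[|j]]]] /=; dexp; ring.
Qed.

Lemma helper (x y e : K) : e = 0 -> y - x = e -> x = y.
Proof. by move=> -> /eqP; rewrite subr_eq0 => /eqP. Qed.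

Lemma uniqR (a20 a11 a02 a10 a01 a00 : K) :
  let Dx := mono (1 : K) 1 0 in
  let Dy := mono (1 : K) 0 1 in
  let L := dcomp dx dy Dx (dcomp dx dy Dy (Dx + Dy))
           + mono a20 2 0 + mono a11 1 1 + mono a02 0 2
           + mono a10 1 0 + mono a01 0 1 + mono a00 0 0 in
  let s2 := a20 - a11 + a02 in
  let R := mono (a10 - a20 * a11 + a20 ^+ 2 - dx a20 + dy s2) 1 0
         + mono (a01 - a02 * a11 + a02 ^+ 2 + dx (a02 - a11)) 0 1
         + mono (a00 + a20 * a02 * s2 + s2 * dx a20 + a20 * dx s2
                 + dx (dy s2) + a02 * dy s2) 0 0 in
  forall c1 c2 c3 (R' : op K), L - R' = E c1 c2 c3 -> (Defs.ord1 R' <= 2)%N -> R' = R.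
Proof.
move=> Dx Dy L s2 R c1 c2 c3 R' h ho.
have eR : R' = L - E c1 c2 c3 by rewrite -h opprB addrC subrK.
have z i j : (2 <= i + j)%N -> coef (L - E c1 c2 c3) i j = 0.
  by move=> hij; rewrite -eR; exact: ord1_zero.
have := z 2%N 0%N isT; have := z 0%N 2%N isT; have := z 1%N 1%N isT.
rewrite /L /E /Dx /Dy; expandE; rewrite !(coefD', coefB', coefN', coef_mono) /=; dexp.
move=> z11 z02 z20.
have e2 : c2 = a20 by apply: (helper z20); ring.
have e1 : c1 = a02 by apply: (helper z02); ring.
subst c1 c2.
have e3 : c3 = - s2 by apply: (helper z11); rewrite /s2; ring.
subst c3; rewrite eR; exact: (LE a20 a11 a02 a10 a01 a00).
Qed.
End Comp.

Theorem mainTheorem14 (K : fieldType) (dx dy : K -> K)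
  (hdx : derivation dx) (hdy : derivation dy)
  (hcomm : forall f : K, dx (dy f) = dy (dx f))
  (a20 a11 a02 a10 a01 a00 : K) :
  let Dx := mono (1 : K) 1 0 in
  let Dy := mono (1 : K) 0 1 in
  let L := dcomp dx dy Dx (dcomp dx dy Dy (Dx + Dy))
           + mono a20 2 0 + mono a11 1 1 + mono a02 0 2
           + mono a10 1 0 + mono a01 0 1 + mono a00 0 0 in
  let s2 := a20 - a11 + a02 in
  let R := mono (a10 - a20 * a11 + a20 ^+ 2 - dx a20 + dy s2) 1 0
         + mono (a01 - a02 * a11 + a02 ^+ 2 + dx (a02 - a11)) 0 1
         + mono (a00 + a20 * a02 * s2 + s2 * dx a20 + a20 * dx s2
                 + dx (dy s2) + a02 * dy s2) 0 0 in
  forall R' : op K,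
    common_obstacle dx dy L (mono 1 1 0) (mono 1 0 1) (mono 1 1 0 + mono 1 0 1) R'
    <-> R' = R.
Proof.
move=> Dx Dy L s2 R R'.
have hLE : L - @E K dx dy a02 a20 (- s2) = R := @LE K dx dy hdx hdy a20 a11 a02 a10 a01 a00.
have hU : forall c1 c2 c3 (R'' : op K), L - R'' = @E K dx dy c1 c2 c3 ->
    (Defs.ord1 R'' <= 2)%N -> R'' = R := @uniqR K dx dy hdx hdy a20 a11 a02 a10 a01 a00.
have hR2 : (Defs.ord1 R <= 2)%N.
  apply/ord1_leP => i j; rewrite /R !coefD' !coef_mono.
  by case: i => [|[|i]]; case: j => [|[|j]] //=; rewrite ?addr0 ?add0r ?eqxx.
have hex : has_fact_type dx dy (L - R) (mono 1 1 0) (mono 1 0 1) (mono 1 1 0 + mono 1 0 1).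
  exists (mono 1 1 0 + mono 0 0 1 + mono a02 0 0), (mono 0 1 0 + mono 1 0 1 + mono a20 0 0),
    (mono 1 1 0 + mono 1 0 1 + mono (- s2) 0 0).
  split.
  - by rewrite sym_of ?oner_neq0 // mono0 addr0.
  - by rewrite sym_of ?oner_neq0 ?orbT // mono0 add0r.
  - by rewrite sym_of ?oner_neq0.
  - by rewrite -hLE opprB addrC subrK.
have hfact : forall R'', has_fact_type dx dy (L - R'') (mono 1 1 0) (mono 1 0 1)
    (mono 1 1 0 + mono 1 0 1) -> (Defs.ord1 R'' <= 2)%N -> R'' = R.
  move=> R'' [F1 [F2 [F3 [h1 h2 h3 h]]]] ho.
  have h1' : Sym F1 = mono 1 1 0 + mono 0 0 1 by rewrite mono0 addr0.
  have h2' : Sym F2 = mono 0 1 0 + mono 1 0 1 by rewrite mono0 add0r.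
  rewrite (sym_shape h1') ?oner_neq0 // (sym_shape h2') ?oner_neq0 ?orbT //
    (sym_shape h3) ?oner_neq0 // in h.
  exact: hU h ho.
split.
- move=> [hf hmin]; apply: hfact hf _; exact: leq_trans (hmin R hex) hR2.
- move=> ->; split => // R'' hf.
  case: (leqP (Defs.ord1 R'') 2) => ho; first by rewrite (hfact R'' hf ho).
  exact: leq_trans hR2 (ltnW ho).
Qed.
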